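(* Let $F\in\mathbb{R}[x_1,\dots,x_n]$ be a form (homogeneous polynomial) with $F(X)>0$ for all $X\in\mathbb{T}_n=\{(x_1,\dots,x_n): x_i\ge0,\ \sum_i x_i=1\}$. Then the sequence of sets $\{\mathrm{SDS}^{(m)}(F)\}_{m\ge1}$ is positively terminating, i.e., there exists a positive integer $k$ such that every form in $\mathrm{SDS}^{(k)}(F)$ has all coefficients nonnegative.
   Context: $W_n$ is the $n\times n$ matrix with $(W_n)_{ij}=1/j$ for $i\le j$ and $0$ for $i>j$. For a permutation $[k_1\cdots k_n]$ of $1,\dots,n$, $P_{[k_1\cdots k_n]}$ is the permutation matrix with $1$ in positions $(i,k_i)$ and $0$ elsewhere, and $B_{[k_1\cdots k_n]}=P_{[k_1\cdots k_n]}W_n$; $PW_n$ denotes the set of these $n!$ matrices. For $m\ge1$, $\mathrm{SDS}^{(m)}(F)$ is the set of forms $F(B_{[\alpha_1]}B_{[\alpha_2]}\cdots B_{[\alpha_m]}X^{\mathrm{Tr}})$, $X=(x_1,\dots,x_n)$, as $B_{[\alpha_1]},\dots,B_{[\alpha_m]}$ range independently over $PW_n$. *)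

(* Defs.v *)
From HB Require Import structures.
From mathcomp Require Import all_boot all_order all_algebra all_fingroup.
From mathcomp Require Import mpoly.
From mathcomp Require Import reals.
Set Implicit Arguments. Unset Strict Implicit. Unset Printing Implicit Defensive.
Import Order.TTheory GRing.Theory Num.Theory.
Local Open Scope ring_scope.

(* W_n : (W_n)_{ij} = 1/j if i <= j, 0 otherwise (1-indexed);
   with 0-indexed ordinals the entry (i,j) is 1/(j+1) when i <= j. *)
Definition W_mx (R : fieldType) (n : nat) : 'M[R]_n :=
  \matrix_(i < n, j < n) (if (i <= j)%N then (j.+1%:R)^-1 else 0).

(* P_[k_1...k_n] has 1 in positions (i, k_i): this is perm_mx s with s i = k_i
   (perm_mx s = row_perm s 1, whose (i,j) entry is (s i == j)). *)
Definition P_mx (R : fieldType) (n : nat) (s : 'S_n) : 'M[R]_n := perm_mx s.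

Definition B_mx (R : fieldType) (n : nat) (s : 'S_n) : 'M[R]_n :=
  P_mx R s *m W_mx R n.

Definition B_prod (R : fieldType) (n : nat) (al : seq 'S_n) : 'M[R]_n :=
  foldr (fun s M => B_mx R s *m M) 1%:M al.

(* F(M X^T): substitute x_i := sum_j M_{ij} x_j *)
Definition subst_mx (R : fieldType) (n : nat) (M : 'M[R]_n)
  (F : {mpoly R[n]}) : {mpoly R[n]} :=
  comp_mpoly [tuple \sum_(j < n) M i j *: 'X_j | i < n] F.

Definition SDS (R : fieldType) (n m : nat) (F : {mpoly R[n]}) : {mpoly R[n]} -> Prop :=
  fun G => exists al : m.-tuple 'S_n, G = subst_mx (B_prod R al) F.

(* Main.v *)
Require Import Defs.
From HB Require Import structures.
From mathcomp Require Import all_boot all_order all_algebra all_fingroup.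
From mathcomp Require Import mpoly.
From mathcomp Require Import reals.
From mathcomp Require Import all_classical topology normedtype derive matrix_normedtype.
From mathcomp Require Import ring lra.
Import Order.TTheory GRing.Theory Num.Theory.
Local Open Scope ring_scope.
Import numFieldNormedType.Exports.
Set Implicit Arguments. Unset Strict Implicit.

Section Cont.
Variable (R : realType) (n : nat).

Lemma cont_sum (T : Type) (r : seq T) (f : T -> 'rV[R]_n -> R) :
  (forall t, continuous (f t)) -> continuous (fun v => \sum_(t <- r) f t v).
Proof.
move=> hf; elim: r => [|t r IH].
  under eq_fun do rewrite big_nil. exact: cst_continuous.
under eq_fun do rewrite big_cons.
move=> x; apply: continuousD; [exact: hf | exact: IH].
Qed.

Lemma cont_prod (T : Type) (r : seq T) (f : T -> 'rV[R]_n -> R) :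
  (forall t, continuous (f t)) -> continuous (fun v => \prod_(t <- r) f t v).
Proof.
move=> hf; elim: r => [|t r IH].
  under eq_fun do rewrite big_nil. exact: cst_continuous.
under eq_fun do rewrite big_cons.
move=> x; have := continuousM (hf t x) (IH x). exact.
Qed.

Lemma cont_expr (f : 'rV[R]_n -> R) k : continuous f -> continuous (fun v => f v ^+ k).
Proof.
move=> hf; elim: k => [|k IH].
  under eq_fun do rewrite expr0. exact: cst_continuous.
under eq_fun do rewrite exprS.
move=> x; have := continuousM (hf x) (IH x). exact.
Qed.

Lemma cont_meval (p : {mpoly R[n]}) :
  continuous (fun v : 'rV[R]_n => p.@[fun i => v ord0 i]).
Proof.
under eq_fun do rewrite mevalE.
apply: cont_sum => m; move=> x; have h2 : continuous (fun v : 'rV[R]_n => \prod_(i < n) v ord0 i ^+ m i).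
  apply: cont_prod => i; apply: cont_expr; exact: coord_continuous.
have := continuousM (@cst_continuous _ _ (p@_m) x) (h2 x). exact.
Qed.
End Cont.

Section MinS.
Local Open Scope classical_set_scope.
Lemma min_simplex (R : realType) (n : nat) (hn : (0 < n)%N) (F : {mpoly R[n]})
  (hpos : forall x : 'I_n -> R,
      (forall i, 0 <= x i) -> \sum_(i < n) x i = 1 -> 0 < F.@[x]) :
  exists2 mu : R, 0 < mu & forall x : 'I_n -> R,
      (forall i, 0 <= x i) -> \sum_(i < n) x i = 1 -> mu <= F.@[x].
Proof.
pose A : set 'rV[R]_n := [set v | (forall i, 0 <= v ord0 i) /\ \sum_(i < n) v ord0 i = 1].
have A0 : A !=set0.
  exists (\row_(i < n) (n%:R^-1 : R)); split => [i|]; rewrite /=.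
    by rewrite mxE invr_ge0 ler0n.
  under eq_bigr do rewrite mxE.
  by rewrite sumr_const card_ord -[_ *+ n]mulr_natr mulVf // pnatr_eq0 -lt0n.
have cA : compact A.
  apply: (@subclosed_compact _ _ [set v : 'rV[R]_n | forall i, `[0%R, 1%R]%classic (v ord0 i)]).
  - have -> : A = (\bigcap_(i in setT) [set v : 'rV[R]_n | 0 <= v ord0 i]) `&`
        ((fun v : 'rV[R]_n => \sum_(i < n) v ord0 i) @^-1` [set x : R | x = 1]).
      apply/seteqP; split => v /=.
        by move=> [h1 h2]; split => // i _; exact: h1.
      by move=> [h1 h2]; split => // i; exact: h1.
    apply: closedI.
      apply: closed_bigI => i _.
      apply: (@preimage_closed _ _ (fun v : 'rV[R]_n => v ord0 i) [set x | 0 <= x]).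
        by move=> v _; exact: coord_continuous.
      exact: closed_ge.
    apply: (@preimage_closed _ _ (fun v : 'rV[R]_n => \sum_(i < n) v ord0 i) [set x : R | x = 1]).
      move=> v _; apply: (@cont_sum R n _ _ (fun i v => v ord0 i)) => i.
      exact: coord_continuous.
    exact: closed_eq.
  - have := (@rV_compact R n (fun _ => `[0%R, 1%R]%classic)); apply; move=> i; exact: segment_compact.
  - move=> v [h1 h2] i /=; rewrite in_itv /= h1 /=.
    rewrite -h2 (bigD1 i) //= lerDl; apply: sumr_ge0 => j _; exact: h1.
have cf : {within A, continuous (fun v : 'rV[R]_n => F.@[fun i => v ord0 i])}.
  apply: continuous_subspaceT; exact: cont_meval.
have [c cA' cmin] := EVT_min_rV A0 cA cf.
move: (cA'); rewrite inE => -[c1 c2].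
exists F.@[fun i => c ord0 i]; first exact: hpos.
move=> x x0 x1.
have := cmin (\row_(i < n) x i).
have -> : (fun i => (\row_(i < n) x i) ord0 i) = x.
  by apply: funext => i; rewrite mxE.
apply; rewrite inE; split => [i|]; rewrite ?mxE //.
by under eq_bigr do rewrite mxE.
Qed.
End MinS.

Section Pos.
Variables (R : realType) (n : nat).
Implicit Types p q : {mpoly R[n]}.

Definition Pos p := forall m, 0 <= p@_m.

Lemma Pos0 : Pos 0. Proof. by move=> m; rewrite mcoeff0. Qed.
Lemma PosD p q : Pos p -> Pos q -> Pos (p + q).
Proof. by move=> hp hq m; rewrite mcoeffD addr_ge0. Qed.
Lemma PosZ c p : 0 <= c -> Pos p -> Pos (c *: p).
Proof. by move=> hc hp m; rewrite mcoeffZ mulr_ge0. Qed.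
Lemma PosX m : Pos ('X_[m] : {mpoly R[n]}).
Proof. by move=> k; rewrite mcoeffX ler0n. Qed.
Lemma Pos1 : Pos (1 : {mpoly R[n]}).
Proof. by move=> k; rewrite mcoeff1 ler0n. Qed.
Lemma PosM p q : Pos p -> Pos q -> Pos (p * q).
Proof.
by move=> hp hq m; rewrite mcoeffM; apply: sumr_ge0 => k _; apply: mulr_ge0.
Qed.
Lemma Pos_sum (I : Type) (r : seq I) (P : pred I) (f : I -> {mpoly R[n]}) :
  (forall i, P i -> Pos (f i)) -> Pos (\sum_(i <- r | P i) f i).
Proof.
move=> h; elim/big_rec: _ => [|i x Pi hx]; [exact: Pos0 | exact: PosD (h i Pi) hx].
Qed.
Lemma Pos_prod (I : Type) (r : seq I) (P : pred I) (f : I -> {mpoly R[n]}) :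
  (forall i, P i -> Pos (f i)) -> Pos (\prod_(i <- r | P i) f i).
Proof.
move=> h; elim/big_rec: _ => [|i x Pi hx]; [exact: Pos1 | exact: PosM (h i Pi) hx].
Qed.
Lemma PosXn p k : Pos p -> Pos (p ^+ k).
Proof. by move=> hp; elim: k => [|k IH]; [rewrite expr0; exact: Pos1 | rewrite exprS; exact: PosM]. Qed.

Lemma Pos_exp_mono u v k : Pos u -> Pos (v - u) -> Pos (v ^+ k - u ^+ k).
Proof.
move=> hu hvu; elim: k => [|k IH]; first by rewrite !expr0 subrr; exact: Pos0.
have hv : Pos v by rewrite -(subrK u v); exact: PosD.
have -> : v ^+ k.+1 - u ^+ k.+1 = v * (v ^+ k - u ^+ k) + (v - u) * u ^+ k.
  by rewrite !exprS mulrBr mulrBl addrA subrK.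
by apply: PosD; apply: PosM => //; exact: PosXn.
Qed.

Lemma Pos_prod_mono (I : Type) (r : seq I) (u v : I -> {mpoly R[n]}) :
  (forall i, Pos (u i)) -> (forall i, Pos (v i - u i)) ->
  Pos (\prod_(i <- r) v i - \prod_(i <- r) u i).
Proof.
move=> hu hvu; elim: r => [|i r IH]; first by rewrite !big_nil subrr; exact: Pos0.
have hv : Pos (v i) by rewrite -(subrK (u i) (v i)); exact: PosD.
rewrite !big_cons.
have -> : v i * \prod_(j <- r) v j - u i * \prod_(j <- r) u j =
   v i * (\prod_(j <- r) v j - \prod_(j <- r) u j) + (v i - u i) * \prod_(j <- r) u j.
  by rewrite mulrBr mulrBl addrA subrK.
by apply: PosD; apply: PosM => //; exact: Pos_prod.
Qed.
End Pos.

Section Real.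
Variable R : realType.

Lemma prod_diff (I : Type) (r : seq I) (a b : I -> R) :
  (forall i, 0 <= a i) -> (forall i, a i <= b i) -> (forall i, b i <= 1) ->
  [/\ 0 <= \prod_(i <- r) a i, \prod_(i <- r) a i <= \prod_(i <- r) b i,
      \prod_(i <- r) b i <= 1 &
      \prod_(i <- r) b i - \prod_(i <- r) a i <= \sum_(i <- r) (b i - a i)].
Proof.
move=> ha hab hb; elim: r => [|i r [h1 h2 h3 h4]].
  by rewrite !big_nil subrr lexx ler01.
rewrite !big_cons.
move: h1 h2 h3 h4.
set A := \prod_(j <- r) a j; set B := \prod_(j <- r) b j; set S := \sum_(j <- r) _.
move=> h1 h2 h3 h4.
have h5 := ha i; have h6 := hab i; have h7 := hb i.
split; [nra | nra | nra | nra].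
Qed.

Lemma pow_diff (a b : R) k : 0 <= a -> a <= b -> b <= 1 ->
  b ^+ k - a ^+ k <= k%:R * (b - a).
Proof.
move=> ha hab hb; elim: k => [|k IH]; first by rewrite !expr0 subrr mul0r.
have h1 : 0 <= a ^+ k by exact: exprn_ge0.
have h2 : a ^+ k <= b ^+ k by apply: lerXn2r; rewrite ?nnegrE //; apply: le_trans hab.
have h3 : b ^+ k <= 1 by apply: exprn_ile1 => //; apply: le_trans hab.
rewrite !exprS -natr1. nra.
Qed.

Lemma mono_diff (n : nat) (e : 'I_n -> nat) (a b : 'I_n -> R) :
  (forall i, 0 <= a i) -> (forall i, a i <= b i) -> (forall i, b i <= 1) ->
  \prod_(i < n) b i ^+ e i - \prod_(i < n) a i ^+ e i <=
  \sum_(i < n) (e i)%:R * (b i - a i).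
Proof.
move=> ha hab hb.
have [_ _ _ h] := @prod_diff 'I_n (index_enum 'I_n) (fun i => a i ^+ e i) (fun i => b i ^+ e i)
  (fun i => exprn_ge0 _ (ha i))
  (fun i => lerXn2r _ (ha i) (le_trans (ha i) (hab i)) (hab i))
  (fun i => exprn_ile1 _ (le_trans (ha i) (hab i)) (hb i)).
apply: le_trans h _; apply: ler_sum => i _; exact: pow_diff.
Qed.

Lemma mono_le (n : nat) (e : 'I_n -> nat) (a b : 'I_n -> R) :
  (forall i, 0 <= a i) -> (forall i, a i <= b i) ->
  \prod_(i < n) a i ^+ e i <= \prod_(i < n) b i ^+ e i.
Proof.
move=> ha hab; apply: ler_prod => i _; rewrite exprn_ge0 //=.
by apply: lerXn2r; rewrite ?nnegrE //; apply: le_trans (hab i).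
Qed.
End Real.

Section Main.
Variable R : realType.

Lemma main_mx (n d : nat) (F : {mpoly R[n]}) (hF : F \is d.-homog)
  (M : 'M[R]_n) (p : 'I_n -> R) (delta : R)
  (hM0 : forall i j, 0 <= M i j) (hM1 : forall i j, M i j <= 1)
  (hp0 : forall i, 0 <= p i) (hp1 : forall i, p i <= 1)
  (hd : forall i j, `|M i j - p i| <= delta)
  (hsmall : 2 * delta * d%:R * \sum_(m <- msupp F) `|F@_m| <= F.@[p]) :
  forall m, 0 <= (subst_mx M F)@_m.
Proof.
pose a i := Num.max (p i - delta) 0.
pose b i := Num.min (p i + delta) 1.
have ha0 i : 0 <= a i by rewrite le_max lexx orbT.
have haM i j : a i <= M i j.
  have := hd i j; rewrite ler_norml => /andP[h _].
  rewrite ge_max hM0 andbT; lra.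
have hbM i j : M i j <= b i.
  have := hd i j; rewrite ler_norml => /andP[_ h].
  rewrite le_min hM1 andbT; lra.
have hb1 i : b i <= 1 by rewrite ge_min lexx orbT.
have hap i : a i <= p i.
  have hdl := le_trans (normr_ge0 _) (hd i i).
  rewrite ge_max hp0 andbT; lra.
have hpb i : p i <= b i.
  have hdl := le_trans (normr_ge0 _) (hd i i).
  rewrite le_min hp1 andbT; lra.
have hab i : a i <= b i by exact: le_trans (hap i) (hpb i).
have hba i : b i - a i <= 2 * delta.
  have h1 : b i <= p i + delta by rewrite ge_min lexx.
  have h2 : p i - delta <= a i by rewrite le_max lexx.
  lra.
have hdeg : {in msupp F, forall m, mdeg m = d} by apply/dhomogP.
pose l i : {mpoly R[n]} := \sum_(j < n) M i j *: 'X_j.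
pose s : {mpoly R[n]} := \sum_(j < n) 'X_j.
have hs : Pos s by apply: Pos_sum => j _; exact: PosX.
have hl1 i : Pos (l i - a i *: s).
  rewrite /l /s scaler_sumr -sumrB; apply: Pos_sum => j _.
  rewrite -scalerBl; apply: PosZ; last exact: PosX.
  by rewrite subr_ge0.
have hl2 i : Pos (b i *: s - l i).
  rewrite /l /s scaler_sumr -sumrB; apply: Pos_sum => j _.
  rewrite -scalerBl; apply: PosZ; last exact: PosX.
  by rewrite subr_ge0.
have hprodsc (c : 'I_n -> R) e : e \in msupp F ->
    \prod_(i < n) (c i *: s) ^+ e i = (\prod_(i < n) c i ^+ e i) *: s ^+ d.
  move=> he; under eq_bigr do rewrite exprZn.
  by rewrite scaler_prod prodrXr -mdegE hdeg.
pose T e := \prod_(i < n) l i ^+ e i.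
pose A (e : 'X_{1..n}) := \prod_(i < n) a i ^+ e i.
pose B (e : 'X_{1..n}) := \prod_(i < n) b i ^+ e i.
pose P (e : 'X_{1..n}) := \prod_(i < n) p i ^+ e i.
have hlow e : e \in msupp F -> Pos (T e - A e *: s ^+ d).
  move=> he; rewrite -hprodsc //; apply: Pos_prod_mono => i.
    by apply: PosXn; apply: PosZ.
  by apply: Pos_exp_mono => //; apply: PosZ.
have hup e : e \in msupp F -> Pos (B e *: s ^+ d - T e).
  move=> he; rewrite -hprodsc //; apply: Pos_prod_mono => i.
    by apply: PosXn; rewrite -(subrK (a i *: s) (l i)); apply: PosD => //; apply: PosZ.
  by apply: Pos_exp_mono => //; rewrite -(subrK (a i *: s) (l i)); apply: PosD => //; apply: PosZ.
pose k e := if 0 <= F@_e then F@_e * A e else F@_e * B e.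
have hk e : e \in msupp F -> Pos (F@_e *: T e - k e *: s ^+ d).
  move=> he; rewrite /k; case: ifP => hc.
    by rewrite -scalerA -scalerBr; apply: PosZ => //; exact: hlow.
  have -> : F@_e *: T e - (F@_e * B e) *: s ^+ d = (- F@_e) *: (B e *: s ^+ d - T e).
    by rewrite scalerBr !scaleNr opprK scalerA addrC.
  apply: PosZ; last exact: hup.
  by rewrite oppr_ge0; apply: ltW; rewrite ltNge hc.
pose K := \sum_(e <- msupp F) k e.
have hK : 0 <= K.
  have hBA e : e \in msupp F -> B e - A e <= 2 * delta * d%:R.
    move=> he; apply: le_trans (mono_diff (fun i => e i) ha0 hab hb1) _.
    apply: le_trans (ler_sum _ (fun i _ => ler_wpM2l (ler0n _ (e i)) (hba i))) _.
    rewrite -mulr_suml -natr_sum -mdegE hdeg //; lra.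
  have hke e : e \in msupp F -> F@_e * P e - `|F@_e| * (2 * delta * d%:R) <= k e.
    move=> he; have h1 : A e <= P e := mono_le (fun i => e i) ha0 hap.
    have h2 : P e <= B e := mono_le (fun i => e i) hp0 hpb.
    have h3 := hBA e he.
    rewrite /k; case: ifP => hc.
      rewrite ger0_norm //; nra.
    have hc' : F@_e < 0 by rewrite ltNge hc.
    rewrite ltr0_norm //; nra.
  have : \sum_(e <- msupp F) (F@_e * P e - `|F@_e| * (2 * delta * d%:R)) <= K.
    rewrite /K big_seq [X in _ <= X]big_seq; apply: ler_sum => e he; exact: hke.
  rewrite sumrB -mulr_suml.
  have -> : \sum_(e <- msupp F) F@_e * P e = F.@[p] by rewrite mevalE.
  lra.
have hG : subst_mx M F = (subst_mx M F - K *: s ^+ d) + K *: s ^+ d by rewrite subrK.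
have hP : Pos (subst_mx M F).
  rewrite hG; apply: PosD; last by apply: PosZ => //; exact: PosXn.
  rewrite /subst_mx comp_mpolyE /K scaler_suml -sumrB big_seq.
  apply: Pos_sum => e he.
  have -> : \prod_(i < n) tnth [tuple \sum_(j < n) M i j *: 'X_j  | i < n] i ^+ e i = T e.
    by apply: eq_bigr => i _; rewrite tnth_mktuple.
  exact: hk.
exact: hP.
Qed.
End Main.

Section Geo.
Variable R : realType.

Lemma B_prod_rcons n (al : seq 'S_n) s :
  B_prod R (rcons al s) = B_prod R al *m B_mx R s.
Proof.
elim: al => [|a al IH] /=; first by rewrite mulmx1 mul1mx.
by rewrite IH mulmxA.
Qed.

Lemma mulB_entry n (M : 'M[R]_n) (s : 'S_n) i j :
  (M *m B_mx R s) i j = (j.+1%:R)^-1 * \sum_(t < n | (t < j.+1)%N) M i ((s^-1)%g t).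
Proof.
rewrite /B_mx /P_mx -row_permE mxE.
rewrite (reindex_inj (@perm_inj _ (s^-1)%g)) /=.
rewrite [RHS]mulr_sumr [RHS]big_mkcond /=; apply: eq_bigr => t _.
rewrite !mxE permKV ltnS; case: ifP => _; last by rewrite mulr0.
by rewrite mulrC.
Qed.

Lemma cnt_min n k : \sum_(t < n | (t < k)%N) (1 : R) = (minn k n)%:R.
Proof.
rewrite big_mkcond /=; elim: n => [|n IH]; first by rewrite big_ord0 minn0.
rewrite big_ord_recr /= IH; case: (ltnP n k) => h.
  by rewrite (minn_idPr h) -natr1.
by rewrite addr0 (minn_idPl (leqW h)).
Qed.

Lemma cnt n k : (k <= n)%N -> \sum_(t < n | (t < k)%N) (1 : R) = k%:R.
Proof. by move=> h; rewrite cnt_min (minn_idPl h). Qed.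

Lemma sum_split n (f : 'I_n -> R) k1 k2 : (k1 <= k2)%N ->
  \sum_(t < n | (t < k2)%N) f t =
  \sum_(t < n | (t < k1)%N) f t + \sum_(t < n | (k1 <= t < k2)%N) f t.
Proof.
move=> h; rewrite (bigID (fun t : 'I_n => (t < k1)%N)) /=; congr (_ + _).
  apply: eq_bigl => t; case: (ltnP t k1) => ht; rewrite ?andbT ?andbF //.
  exact: leq_trans ht h.
by apply: eq_bigl => t; rewrite -leqNgt andbC.
Qed.

Lemma sum_bounds (I : finType) (P : pred I) (f : I -> R) lo D :
  (forall t, lo <= f t <= lo + D) ->
  lo * \sum_(t | P t) 1 <= \sum_(t | P t) f t <= (lo + D) * \sum_(t | P t) 1.
Proof.
move=> h; rewrite !mulr_sumr !mulr1; apply/andP; split; apply: ler_sum => t _;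
  by case/andP: (h t).
Qed.

Lemma avg_step n (x : 'I_n -> R) lo D k1 k2 :
  (0 < k1)%N -> (k1 <= k2)%N -> (k2 <= n)%N -> 0 <= D ->
  (forall t, lo <= x t <= lo + D) ->
  `|(k1%:R)^-1 * \sum_(t < n | (t < k1)%N) x t - (k2%:R)^-1 * \sum_(t < n | (t < k2)%N) x t|
   <= (1 - (n%:R)^-1) * D.
Proof.
move=> h1 h12 h2n hD hx.
rewrite (sum_split x h12).
have hc : \sum_(t < n | (k1 <= t < k2)%N) (1:R) = k2%:R - k1%:R.
  by rewrite -(cnt h2n) (sum_split _ h12) (cnt (leq_trans h12 h2n)) addrC addKr.
have /andP[hS1a hS1b] := sum_bounds (fun t : 'I_n => (t < k1)%N) hx.
rewrite (cnt (leq_trans h12 h2n)) in hS1a hS1b.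
have /andP[hQa hQb] := sum_bounds (fun t : 'I_n => (k1 <= t < k2)%N) hx.
rewrite hc in hQa hQb.
move: hS1a hS1b hQa hQb.
set S1 := \sum_(t < n | (t < k1)%N) x t.
set Q := \sum_(t < n | (k1 <= t < k2)%N) x t.
set c1 := k1%:R; set c2 := k2%:R; set cn := n%:R.
move=> hS1a hS1b hQa hQb.
have c1ge : 1 <= c1 by rewrite /c1 ler1n.
have c12 : c1 <= c2 by rewrite /c1 /c2 ler_nat.
have c2n : c2 <= cn by rewrite /c2 /cn ler_nat.
have cnpos : 0 < cn by lra.
have hu : cn^-1 * cn = 1 by rewrite mulVf // gt_eqF.
have hu0 : 0 < cn^-1 by rewrite invr_gt0.
move: hu hu0; set u := cn^-1 => hu hu0.
have hc2u : c2 * u <= 1 by nra.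
have -> : c1^-1 * S1 - c2^-1 * (S1 + Q) = ((c2 - c1) * S1 - c1 * Q) / (c1 * c2).
  by field; apply/andP; split; apply: lt0r_neq0; lra.
have hnum : `|(c2 - c1) * S1 - c1 * Q| <= (c2 - c1) * c1 * D.
  rewrite ler_norml; apply/andP; split; nra.
rewrite normrM normfV (gtr0_norm (_ : 0 < c1 * c2)); last by nra.
rewrite ler_pdivrMr; last by nra.
apply: le_trans hnum _.
have h3 : 0 <= c1 * D * (c1 - u * c2) by apply: mulr_ge0; [nra | nra].
nra.
Qed.

Definition Inv n (M : 'M[R]_n) (D : R) :=
  [/\ forall i j, 0 <= M i j, forall j, \sum_(i < n) M i j = 1 &
      forall i j j', `|M i j - M i j'| <= D].

Lemma Inv_step n (M : 'M[R]_n) D (s : 'S_n) : (0 < n)%N -> 0 <= D -> Inv M D ->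
  Inv (M *m B_mx R s) ((1 - (n%:R)^-1) * D).
Proof.
move=> hn hD [h0 h1 h2]; split.
- move=> i j; rewrite mulB_entry; apply: mulr_ge0; first by rewrite invr_ge0 ler0n.
  by apply: sumr_ge0 => t _; exact: h0.
- move=> j; under eq_bigr do rewrite mulB_entry.
  rewrite -mulr_sumr exchange_big /=.
  under eq_bigr do rewrite h1.
  by rewrite cnt ?ltn_ord // mulVf // pnatr_eq0.
- move=> i.
  have [tm _ htm] := @arg_minP _ R _ (Ordinal hn) xpredT (fun t => M i ((s^-1)%g t)) isT.
  set lo := M i ((s^-1)%g tm) in htm.
  have hx t : lo <= M i ((s^-1)%g t) <= lo + D.
    apply/andP; split; first exact: htm.
    have := h2 i ((s^-1)%g t) ((s^-1)%g tm); rewrite ler_norml => /andP[_ h]; rewrite /lo; lra.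
  suff hw (j j' : 'I_n) : (j <= j')%N -> `|(M *m B_mx R s) i j - (M *m B_mx R s) i j'| <= (1 - n%:R^-1) * D.
    move=> j j'; case: (leqP j j') => h; first exact: hw.
    by rewrite distrC; apply: hw; exact: ltnW.
  move=> hjj; rewrite !mulB_entry; apply: avg_step hx => //; exact: ltn_ord.
Qed.

Lemma Inv_one n : Inv (1%:M : 'M[R]_n) 1.
Proof.
split.
- by move=> i j; rewrite mxE ler0n.
- move=> j; rewrite (bigD1 j) //= big1 => [|i /negbTE hi]; rewrite !mxE ?eqxx ?addr0 //.
  by rewrite hi.
- move=> i j j'; rewrite !mxE.
  by case: (i == j); case: (i == j'); rewrite /= ?subrr ?normr0 ?ler01 ?subr0 ?sub0r ?normrN ?normr1.
Qed.

Lemma Inv_prod n (al : seq 'S_n) : (0 < n)%N ->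
  Inv (B_prod R al) ((1 - (n%:R)^-1) ^+ size al).
Proof.
move=> hn; have hc : 0 <= 1 - (n%:R : R)^-1.
  by rewrite subr_ge0 invf_le1 ?ler1n ?ltr0n.
elim/last_ind: al => [|al s IH]; first by rewrite expr0; exact: Inv_one.
rewrite B_prod_rcons size_rcons exprS.
by apply: Inv_step => //; exact: exprn_ge0.
Qed.

Lemma decay n k : (0 < n)%N ->
  (1 - (n%:R : R)^-1) ^+ k * (n%:R + k%:R) <= n%:R.
Proof.
move=> hn; have cnpos : 0 < (n%:R : R) by rewrite ltr0n.
have hu : (n%:R : R)^-1 * n%:R = 1 by rewrite mulVf // gt_eqF.
have hu0 : 0 < (n%:R : R)^-1 by rewrite invr_gt0.
move: hu hu0; set u := (n%:R : R)^-1 => hu hu0.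
have hc : 0 <= 1 - u by rewrite /u subr_ge0 invf_le1 ?ler1n ?ltr0n.
elim: k => [|k IH]; first by rewrite expr0 mul1r addr0.
have hck : 0 <= (1 - u) ^+ k by exact: exprn_ge0.
have hk0 : 0 <= (k%:R : R) by exact: ler0n.
rewrite exprS -natr1.
have h : (1 - u) * (n%:R + (k%:R + 1)) <= n%:R + k%:R by nra.
apply: le_trans IH; rewrite [_ * _ ^+ k]mulrC -mulrA; exact: (ler_wpM2l hck h).
Qed.
End Geo.


Unset Implicit Arguments.

Theorem theorem4p1 (R : realType) (n : nat) (hn : (0 < n)%N)
  (F : {mpoly R[n]}) (d : nat) (hF : F \is d.-homog)
  (hpos : forall x : 'I_n -> R,
      (forall i, 0 <= x i) -> \sum_(i < n) x i = 1 -> 0 < F.@[x]) :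
  exists k : nat, (0 < k)%N /\
    forall G : {mpoly R[n]}, SDS k F G -> forall m : 'X_{1..n}, 0 <= G@_m.
Proof.
have [mu mu0 hmu] := @min_simplex R n hn F hpos.
pose C := \sum_(m <- msupp F) `|F@_m|.
have hC : 0 <= C by apply: sumr_ge0 => m _; exact: normr_ge0.
have hd0 : 0 <= (d%:R : R) by exact: ler0n.
have hden : 0 < 2 * (d%:R + 1) * (C + 1).
  by apply: mulr_gt0; [apply: mulr_gt0; lra | lra].
pose delta := mu / (2 * (d%:R + 1) * (C + 1)).
have hdel : delta * (2 * (d%:R + 1) * (C + 1)) = mu by rewrite /delta mulfVK // gt_eqF.
have hdel0 : 0 < delta by rewrite /delta divr_gt0.
pose c := 1 - (n%:R : R)^-1.
have [k hk] : exists k : nat, n%:R / delta < k.+1%:R.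
  exists (Num.Def.archi_bound (n%:R / delta)).
  apply: lt_trans (archi_boundP _) _; first by rewrite divr_ge0 ?ler0n // ltW.
  by rewrite ltr_nat.
exists k.+1; split => //.
move=> G [al ->] m.
have [h0 h1 h2] := Inv_prod R (tval al) hn.
rewrite size_tuple in h2.
have hck : c ^+ k.+1 <= delta.
  have h3 := decay R k.+1 hn.
  have h4 : 0 <= c ^+ k.+1 by apply: exprn_ge0; rewrite /c subr_ge0 invf_le1 ?ler1n ?ltr0n.
  have h5 : n%:R < k.+1%:R * delta by rewrite -ltr_pdivrMr.
  have h6 : 0 <= (n%:R : R) by exact: ler0n.
  move: h3 h4; rewrite -/c => h3 h4.
  rewrite mulrDr in h3.
  have h7 : 0 <= c ^+ k.+1 * n%:R by apply: mulr_ge0.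
  have h8 : c ^+ k.+1 * k.+1%:R < delta * k.+1%:R by rewrite [delta * _]mulrC; lra.
  rewrite ltr_pM2r ?ltr0n // in h8; exact: ltW.
set M := B_prod R al in h0 h1 h2 *.
pose p i := M i (Ordinal hn).
have hM1 i j : M i j <= 1.
  rewrite -(h1 j) (bigD1 i) //= lerDl; apply: sumr_ge0 => l _; exact: h0.
have hp0 i : 0 <= p i := h0 _ _.
have hp1 i : p i <= 1 := hM1 _ _.
have hd i j : `|M i j - p i| <= delta := le_trans (h2 i j (Ordinal hn)) hck.
apply: (main_mx hF h0 hM1 hp0 hp1 hd).
  have hp : mu <= F.@[p] by apply: hmu => [i|]; [exact: h0 | exact: h1].
rewrite -/C; apply: le_trans hp; rewrite -hdel.
have h7 : 0 <= delta * C by apply: mulr_ge0 => //; exact: ltW.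
have h8 : 0 <= delta * d%:R by apply: mulr_ge0 => //; exact: ltW.
lra.
Qed.
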